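(* Let $G$ be an abelian group and let $(a_n)_{n\in\omega}$ be a $T$-sequence in $G$ such that $\{a_n:n\in\omega\}$ generates $G$. Then the coarse group $(G,\mathcal{C}_{\tau(a_n)})$ is asymorphic to the Cayley graph $\mathrm{Cay}(G,\{a_n:n\in\omega\})$ endowed with its path metric.
   Context: A sequence $(a_n)$ in an abelian group $G$ is a $T$-sequence if there is a Hausdorff group topology on $G$ in which $(a_n)\to 0$; $\tau(a_n)$ is the strongest group topology on $G$ in which $(a_n)\to0$, and $\mathcal{C}_{\tau(a_n)}$ is the family of precompact subsets of $(G,\tau(a_n))$. A coarse structure on a set $X$ is a family $\mathcal{E}$ of subsets of $X\times X$, each containing the diagonal, closed under composition, inversion, taking subsets containing the diagonal, and such that every pair $(x,y)$ lies in some member. For $E\in\mathcal{E}$, $E[x]=\{y:(x,y)\in E\}$. A group ideal $\mathcal{I}$ on $G$ (a family of subsets containing all finite sets, closed under subsets and under $(A,B)\mapsto A-B$) defines the coarse structure on $G$ with base $\{\{(x,y):x\in A+y\}:A\in\mathcal{I}\}$; $(G,\mathcal{I})$ denotes $G$ with this coarse structure. A metric space is regarded as a coarse space with base of entourages $\{(x,y):d(x,y)\le r\}$, $r\ge0$. For $S\subseteq G$, $\mathrm{Cay}(G,S)$ is the graph with vertex set $G$ and edges $\{(x,y): x-y\in S\cup(-S)\}$. A map $f$ between coarse spaces $(X,\mathcal{E})$, $(X',\mathcal{E}')$ is macro-uniform if for every $E\in\mathcal{E}$ there is $E'\in\mathcal{E}'$ with $f(E[x])\subseteq E'[f(x)]$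 for all $x$; an asymorphism is a bijection $f$ with $f$ and $f^{-1}$ macro-uniform. *)

(* Defs.v *)
From HB Require Import structures.
From mathcomp Require Import all_boot all_order all_algebra.
Set Implicit Arguments. Unset Strict Implicit. Unset Printing Implicit Defensive.
Import GRing.Theory.
Local Open Scope ring_scope.

Section Defs.
Variable G : zmodType.

Definition is_topology (T : (G -> Prop) -> Prop) : Prop :=
  (forall U V : G -> Prop, (forall x, U x <-> V x) -> T U -> T V) /\
  T (fun _ => True) /\
  (forall U V, T U -> T V -> T (fun x => U x /\ V x)) /\
  (forall F : (G -> Prop) -> Prop, (forall U, F U -> T U) ->
     T (fun x => exists U, F U /\ U x)).

Definition is_group_topology (T : (G -> Prop) -> Prop) : Prop :=
  is_topology T /\
  forall (U : G -> Prop) (x y : G), T U -> U (x - y) ->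
    exists V W : G -> Prop, T V /\ T W /\ V x /\ W y /\
      forall v w, V v -> W w -> U (v - w).

Definition hausdorff (T : (G -> Prop) -> Prop) : Prop :=
  forall x y : G, x <> y -> exists U V : G -> Prop,
    T U /\ T V /\ U x /\ V y /\ forall z, U z -> V z -> False.

Definition converges_to_0 (T : (G -> Prop) -> Prop) (a : nat -> G) : Prop :=
  forall U, T U -> U 0 -> exists N, forall n, (N <= n)%N -> U (a n).

Definition T_sequence (a : nat -> G) : Prop :=
  exists T, is_group_topology T /\ hausdorff T /\ converges_to_0 T a.

Definition is_tau (a : nat -> G) (T : (G -> Prop) -> Prop) : Prop :=
  is_group_topology T /\ converges_to_0 T a /\
  forall T', is_group_topology T' -> converges_to_0 T' a ->
    forall U, T' U -> T U.

Definition precompact (T : (G -> Prop) -> Prop) (A : G -> Prop) : Prop :=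
  forall U, T U -> U 0 -> exists F : seq G,
    forall x, A x -> exists f u, f \in F /\ U u /\ x = f + u.

Definition generates (a : nat -> G) : Prop :=
  forall H : G -> Prop, H 0 -> (forall x y, H x -> H y -> H (x - y)) ->
    (forall n, H (a n)) -> forall g, H g.

Definition coarse_str (X : Type) := (X -> X -> Prop) -> Prop.

(* coarse structure of a group ideal I: base {(x,y) : x \in A + y}, A \in I *)
Definition ideal_coarse (I : (G -> Prop) -> Prop) : coarse_str G :=
  fun E => (forall x, E x x) /\
    exists A, I A /\ forall x y, E x y -> exists z, A z /\ x = z + y.

Definition cay_edge (a : nat -> G) (x y : G) : Prop :=
  exists n, x - y = a n \/ x - y = - a n.

(* cay_dist_le a k x y  <->  path distance d(x,y) <= k in Cay(G,{a_n}) *)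
Fixpoint cay_dist_le (a : nat -> G) (k : nat) (x y : G) : Prop :=
  match k with
  | O => x = y
  | S k' => x = y \/ exists z, cay_edge a x z /\ cay_dist_le a k' z y
  end.

(* metric coarse structure of the path metric: base {d <= r}, r >= 0
   (d is integer valued, so r ranges over nat without loss). *)
Definition cayley_coarse (a : nat -> G) : coarse_str G :=
  fun E => (forall x, E x x) /\
    exists r : nat, forall x y, E x y -> cay_dist_le a r x y.

End Defs.

Definition macro_uniform (X Y : Type) (EX : coarse_str X) (EY : coarse_str Y)
  (f : X -> Y) : Prop :=
  forall E, EX E -> exists E', EY E' /\ forall x y, E x y -> E' (f x) (f y).

Definition asymorphic (X Y : Type) (EX : coarse_str X) (EY : coarse_str Y) : Prop :=
  exists (f : X -> Y) (g : Y -> X), cancel f g /\ cancel g f /\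
    macro_uniform EX EY f /\ macro_uniform EY EX g.

(* Main.v *)
From Stdlib Require Import Classical ClassicalEpsilon.
Require Import Defs.
From HB Require Import structures.
From mathcomp Require Import all_boot all_order all_algebra.
Set Implicit Arguments. Unset Strict Implicit. Unset Printing Implicit Defensive.
Import GRing.Theory.
Local Open Scope ring_scope.

Section Dist.
Variable G : zmodType.
Variable a : nat -> G.

Lemma cd_refl r (x : G) : cay_dist_le a r x x.
Proof. by case: r => [|r] /=; [|left]. Qed.

Lemma cd_S r (x y : G) : cay_dist_le a r x y -> cay_dist_le a r.+1 x y.
Proof.
elim: r x => [|r IH] x /=; first by move=> ->; left.
case=> [->|[w [Hw Hr]]]; first by left.
by right; exists w; split => //; apply: IH.
Qed.

Lemma cd_mono r s (x y : G) : (r <= s)%N -> cay_dist_le a r x y -> cay_dist_le a s x y.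
Proof.
move=> rs; rewrite -(subnKC rs); elim: (s - r)%N => [|k IH]; first by rewrite addn0.
by move=> H; rewrite addnS; apply: cd_S; apply: IH.
Qed.

Lemma cd_trans r s (x y z : G) :
  cay_dist_le a r x y -> cay_dist_le a s y z -> cay_dist_le a (r + s) x z.
Proof.
elim: r x => [|r IH] x; first by move=> /= ->.
case=> [-> H| [w [Hw Hr]] Hs].
  by apply: cd_mono H; rewrite leq_addl.
by rewrite addSn; right; exists w; split => //; apply: IH.
Qed.

Lemma cd_transl r (x y t : G) : cay_dist_le a r x y -> cay_dist_le a r (x + t) (y + t).
Proof.
elim: r x => [|r IH] x /=; first by move=> ->.
case=> [->|[w [[n Hn] Hr]]]; first by left.
right; exists (w + t); split; last exact: IH.
by exists n; rewrite opprD addrA addrAC addrK.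
Qed.

Lemma cd_edge1 (x y : G) : cay_edge a x y -> cay_dist_le a 1 x y.
Proof. by move=> H; right; exists y. Qed.

Lemma cd_sym r (x y : G) : cay_dist_le a r x y -> cay_dist_le a r y x.
Proof.
elim: r x => [|r IH] x; first by move=> /= ->.
case=> [->|[w [[n Hn] Hr]]]; first by apply: cd_refl.
rewrite -addn1; apply: cd_trans (IH _ Hr) _.
apply: cd_edge1; exists n; rewrite -opprB.
by case: Hn => ->; [right|left; rewrite opprK].
Qed.

Definition B r (x : G) := cay_dist_le a r x 0.

Lemma B_gen : generates a -> forall g, exists r, B r g.
Proof.
move=> gen; apply: gen.
- by exists 0%N.
- move=> x y [r Hx] [s Hy]; exists (r + s)%N.
  have H1 := cd_transl (- y) Hx; rewrite add0r in H1.
  have H2 := cd_transl (- y) (cd_sym Hy); rewrite add0r subrr in H2.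
  exact: cd_trans H1 H2.
- move=> n; exists 1%N; apply: cd_edge1; exists n; left; by rewrite subr0.
Qed.

Variable tau : (G -> Prop) -> Prop.
Hypothesis Htau : is_tau a tau.
Hypothesis HT : T_sequence a.

Lemma tau_top : is_topology tau.
Proof. by case: Htau => [[]]. Qed.

Lemma tau_full : tau (fun _ => True).
Proof. by case: tau_top => _ []. Qed.

Lemma tau_I U V : tau U -> tau V -> tau (fun x => U x /\ V x).
Proof. by case: tau_top => _ [_ [H _]]; apply: H. Qed.

Lemma tau_ext U V : (forall x, U x <-> V x) -> tau U -> tau V.
Proof. by case: tau_top => H _; apply: H. Qed.

Lemma cont0 U : tau U -> U 0 -> exists V W, tau V /\ tau W /\ V 0 /\ W 0 /\
  forall v w, V v -> W w -> U (v - w).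
Proof.
move=> tU U0; case: Htau => [[_ Hg] _].
by apply: Hg => //; rewrite subr0.
Qed.

Lemma conv U : tau U -> U 0 -> exists M, forall n, (M <= n)%N -> U (a n) /\ U (- a n).
Proof.
move=> tU U0; have [V [W [tV [tW [V0 [W0 HVW]]]]]] := cont0 tU U0.
case: Htau => [_ [Hc _]].
have [M1 H1] := Hc U tU U0.
have [M2 H2] := Hc W tW W0.
exists (maxn M1 M2) => n Hn; split.
  by apply: H1; apply: leq_trans Hn; rewrite leq_maxl.
rewrite -sub0r; apply: HVW => //; apply: H2; apply: leq_trans Hn; by rewrite leq_maxr.
Qed.

Lemma tau_haus : hausdorff tau.
Proof.
case: HT => T [gT [hT cT]]; case: Htau => [_ [_ Hmax]].
move=> x y xy; have [U [V [tU [tV H]]]] := hT x y xy.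
by exists U, V; split; [apply: (Hmax T gT cT)|split; [apply: (Hmax T gT cT)|]].
Qed.

Lemma fin_inter (M : nat) (P : nat -> (G -> Prop) -> Prop) :
  (forall i (N N' : G -> Prop), (forall x, N' x -> N x) -> P i N -> P i N') ->
  (forall i, (i < M)%N -> exists N, tau N /\ N 0 /\ P i N) ->
  exists N, tau N /\ N 0 /\ forall i, (i < M)%N -> P i N.
Proof.
move=> Pmon; elim: M => [|M IH] H.
  by exists (fun _ => True); split; [exact: tau_full|split=> // i].
have [N1 [t1 [z1 P1]]] := IH (fun i Hi => H i (leq_trans Hi (leqnSn M))).
have [N2 [t2 [z2 P2]]] := H M (leqnn _).
exists (fun x => N1 x /\ N2 x); split; first exact: tau_I.
split=> // i; rewrite ltnS leq_eqVlt => /orP [/eqP ->|Hi].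
  by apply: Pmon P2 => x [].
by apply: Pmon (P1 i Hi) => x [].
Qed.

Lemma B_S r (b : G) : B (r.+1) b <-> b = 0 \/ exists z c, B r z /\ b = c + z /\
   exists m, c = a m \/ c = - a m.
Proof.
rewrite /B /=; split.
  case=> [->|[z [[m Hm] Hz]]]; first by left.
  right; exists z, (b - z); split=> //; split; first by rewrite subrK.
  by exists m.
case=> [->|[z [c [Hz [-> [m Hm]]]]]]; first by left.
by right; exists z; split=> //; exists m; rewrite addrK.
Qed.

Lemma closed_B r (d : G) : ~ B r d ->
  exists N, tau N /\ N 0 /\ forall b n, B r b -> N n -> d <> b + n.
Proof.
have Hd0 (x : G) : x <> 0 -> exists N, tau N /\ N 0 /\ forall n, N n -> x <> n.
  move=> x0; have [U [V [tU [tV [Ux [V0 UV]]]]]] := tau_haus x0.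
  by exists V; split=> //; split=> // n Vn E; apply: (UV n) => //; rewrite -E.
elim: r d => [|r IH] d nB.
  have [N [tN [N0 HN]]] := Hd0 d nB.
  by exists N; split=> //; split=> // b n; rewrite /B /= => -> Nn; rewrite add0r; apply: HN.
have d0 : d <> 0 by move=> E; apply: nB; rewrite E; apply: cd_refl.
have [NH [tH [H0 HH]]] := Hd0 d d0.
have [N0 [t0 [z0 H0']]] := IH d (fun H => nB (cd_S H)).
have [V [W [tV [tW [V0 [W0 VW]]]]]] := cont0 t0 z0.
have [M HM] := conv tW W0.
have HF' : forall i, (i < M)%N -> exists N, tau N /\ N 0 /\
    forall b n, B r b -> N n -> d - a i <> b + n /\ d + a i <> b + n.
  move=> i _.
  have [N1 [t1 [z1 P1]]] : exists N, tau N /\ N 0 /\ forall b n, B r b -> N n -> d - a i <> b + n.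
    apply: IH => Hb; apply: nB; apply/B_S; right; exists (d - a i), (a i).
    by split=> //; split; [rewrite addrC subrK|exists i; left].
  have [N2 [t2 [z2 P2]]] : exists N, tau N /\ N 0 /\ forall b n, B r b -> N n -> d + a i <> b + n.
    apply: IH => Hb; apply: nB; apply/B_S; right; exists (d + a i), (- a i).
    by split=> //; split; [rewrite addrC addrK|exists i; right].
  exists (fun x => N1 x /\ N2 x); split; first exact: tau_I.
  by split=> // b n Hb [n1 n2]; split; [apply: P1|apply: P2].
have [NF [tF [zF HF]]] := fin_inter 
  (P := fun i N => forall b n, B r b -> N n -> d - a i <> b + n /\ d + a i <> b + n)
  (fun i N N' sub P b n Hb Hn => P b n Hb (sub n Hn)) HF'.
exists (fun x => NH x /\ V x /\ NF x); split.
  by apply: tau_I => //; apply: tau_I.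
split=> // b n /B_S [->|[z [c [Hz [-> [m Hm]]]]]] [Hn1 [Hn2 Hn3]].
  by rewrite add0r; apply: HH.
case: (leqP M m) => Mm.
  have [Wa Wna] := HM m Mm.
  case: Hm => -> E.
    apply: (H0' z (n - - a m) Hz); first by apply: VW.
    by rewrite E opprK [a m + z]addrC -addrA [a m + n]addrC.
  apply: (H0' z (n - a m) Hz); first by apply: VW.
  by rewrite E [- a m + z]addrC -addrA [- a m + n]addrC.
have [E1 E2] := HF m Mm z n Hz Hn3.
case: Hm => -> E.
  by apply: E1; rewrite E addrAC [a m + z]addrC addrK.
by apply: E2; rewrite E addrAC [- a m + z]addrC subrK.
Qed.


Definition inA (k : nat) (e : G) :=
  e = 0 \/ exists n, (k <= n)%N /\ (e = a n \/ e = - a n).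

Lemma inA0 k : inA k 0. Proof. by left. Qed.

Lemma inA_opp k e : inA k e -> inA k (- e).
Proof.
case=> [->|[n [kn [->|->]]]]; first by rewrite oppr0; left.
  by right; exists n; split=> //; right.
by right; exists n; split=> //; left; rewrite opprK.
Qed.

Lemma inA_mono k k' e : (k <= k')%N -> inA k' e -> inA k e.
Proof.
move=> kk'; case=> [->|[n [kn H]]]; first by left.
by right; exists n; split=> //; apply: leq_trans kn.
Qed.

Definition Us (k : nat -> nat) (u : G) :=
  exists m (e : nat -> G), (forall i, inA (k i) (e i)) /\ u = \sum_(0 <= i < m) e i.

Lemma Us0 k : Us k 0.
Proof. by exists 0%N, (fun _ => 0); split=> [i|]; [left|rewrite big_geq]. Qed.

Lemma Us_opp k u : Us k u -> Us k (- u).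
Proof.
case=> m [e [He ->]]; exists m, (fun i => - e i); split; first by move=> i; apply: inA_opp.
by rewrite sumrN.
Qed.

Lemma Us_mono k k' u : (forall i, k i <= k' i)%N -> Us k' u -> Us k u.
Proof.
move=> kk' [m [e [He ->]]]; exists m, e; split=> // i; exact: inA_mono (He i).
Qed.

Lemma sum_zero_range m n (F : nat -> G) :
  (forall i, (m <= i < n)%N -> F i = 0) -> \sum_(m <= i < n) F i = 0.
Proof. by move=> H; rewrite (eq_big_nat _ _ H) big1_eq. Qed.

Lemma pad_sum (e : nat -> G) m M : (m <= M)%N ->
  \sum_(0 <= i < M) (if (i < m)%N then e i else 0) = \sum_(0 <= i < m) e i.
Proof.
move=> mM; rewrite (big_cat_nat (leq0n m) mM) /=.
rewrite (sum_zero_range (m := m)); last by move=> i /andP [mi _]; rewrite ltnNge mi.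
rewrite addr0; apply: eq_big_nat => i /andP [_ ->] //.
Qed.

Lemma pair_sum (f : nat -> G) M :
  \sum_(0 <= i < M.*2) f i = \sum_(0 <= i < M) (f i.*2 + f (i.*2).+1).
Proof.
elim: M => [|M IH]; first by rewrite !big_geq.
rewrite doubleS !big_nat_recr //= ?IH ?addrA //.

Qed.

Lemma Us_diff k : exists k', forall u v, Us k' u -> Us k' v -> Us k (u - v).
Proof.
exists (fun i => maxn (k i.*2) (k (i.*2).+1)) => u v [m [e [He ->]]] [m' [e' [He' ->]]].
pose M := (m + m')%N.
pose eh i := if (i < m)%N then e i else 0.
pose eh' i := if (i < m')%N then e' i else 0.
exists M.*2, (fun i => if odd i then - eh' i./2 else eh i./2); split.
  move=> i; case: ifP => oi.
    apply: inA_opp; rewrite /eh'; case: ifP => _; last exact: inA0.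
    apply: inA_mono (He' _).
    have Hi : (i./2).*2.+1 = i by have := odd_double_half i; rewrite oi add1n.
    by rewrite Hi leq_maxr.
  rewrite /eh; case: ifP => _; last exact: inA0.
  apply: inA_mono (He _).
  have Hi : (i./2).*2 = i by have := odd_double_half i; rewrite oi add0n.
  by rewrite Hi leq_maxl.
rewrite pair_sum.
have -> : \sum_(0 <= i < M) ((if odd i.*2 then - eh' (i.*2)./2 else eh (i.*2)./2) +
     (if odd (i.*2).+1 then - eh' ((i.*2).+1)./2 else eh ((i.*2).+1)./2))
   = \sum_(0 <= i < M) (eh i - eh' i).
  apply: eq_big_nat => i _.
  rewrite odd_double /= doubleK.
  by rewrite odd_double /= uphalf_double.
rewrite sumrB /eh /eh' !pad_sum //; [exact: leq_addl|exact: leq_addr].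
Qed.

Lemma Us_add k : exists k', forall u v, Us k' u -> Us k' v -> Us k (u + v).
Proof.
have [k' Hk'] := Us_diff k; exists k' => u v Hu Hv.
by rewrite -[v]opprK; apply: Hk' => //; apply: Us_opp.
Qed.


Definition TU (O : G -> Prop) := forall x, O x -> exists k, forall u, Us k u -> O (x + u).
Definition Int (P : G -> Prop) v := exists k, forall u, Us k u -> P (v + u).

Lemma TU_Int P : TU (Int P).
Proof.
move=> v [k Hk]; have [k3 H3] := Us_add k; exists k3 => u Hu.
by exists k3 => w Hw; rewrite -addrA; apply: Hk; apply: H3.
Qed.

Lemma Int_sub P v : Int P v -> P v.
Proof. by case=> k Hk; rewrite -[v]addr0; apply: Hk; apply: Us0. Qed.

Lemma TU_group : is_group_topology TU.
Proof.
split.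
  split.
    move=> U V UV HU x /UV /HU [k Hk]; exists k => u /Hk; exact: (proj1 (UV _)).
  split; first by move=> x _; exists (fun _ => 0%N).
  split.
    move=> U V HU HV x [/HU [k1 H1] /HV [k2 H2]].
    exists (fun i => maxn (k1 i) (k2 i)) => u Hu; split.
      by apply: H1; apply: Us_mono Hu => i; rewrite leq_maxl.
    by apply: H2; apply: Us_mono Hu => i; rewrite leq_maxr.
  move=> F HF x [U [FU Ux]]; have [k Hk] := HF U FU x Ux.
  by exists k => u Hu; exists U; split=> //; apply: Hk.
move=> O x y HO Oxy; have [k Hk] := HO _ Oxy; have [k' Hk'] := Us_diff k.
exists (Int (fun v => Us k' (v - x))), (Int (fun w => Us k' (w - y))).
split; first exact: TU_Int. split; first exact: TU_Int.
split; first by exists k' => u Hu; rewrite addrAC subrr add0r.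
split; first by exists k' => u Hu; rewrite addrAC subrr add0r.
move=> v w /Int_sub Hv /Int_sub Hw.
have := Hk _ (Hk' _ _ Hv Hw).
have E : x - y + (v - x - (w - y)) = v - w by rewrite opprB addrCA !addrA subrK addrAC [v - x - w + x]addrAC (subrK x v).
by rewrite E.
Qed.

Lemma TU_conv : converges_to_0 TU a.
Proof.
move=> O HO O0; have [k Hk] := HO 0 O0; exists (k 0%N) => n kn.
rewrite -[a n]add0r; apply: Hk.
exists 1%N, (fun i => if i == 0%N then a n else 0); split.
  case=> [|i] /=; last exact: inA0.
  by right; exists n; split=> //; left.
by rewrite big_nat1.
Qed.

Lemma TU_tau O : TU O -> tau O.
Proof. by case: Htau => [_ [_ Hmax]]; apply: Hmax; [exact: TU_group|exact: TU_conv]. Qed.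


Lemma B_precompact r : precompact tau (B r).
Proof.
elim: r => [|r IH] U tU U0.
  by exists [:: 0] => x; rewrite /B /= => ->; exists 0, 0; rewrite mem_head addr0.
have [V [W [tV [tW [V0 [W0 VW]]]]]] := cont0 tU U0.
have [F HF] := IH V tV V0.
have [M HM] := conv tW W0.
pose FE := 0 :: ([seq a i | i <- iota 0 M] ++ [seq - a i | i <- iota 0 M]).
exists (0 :: [seq f1 + f2 | f1 <- FE, f2 <- F]) => x /B_S [->|[z [c [Hz [-> [m Hm]]]]]].
  by exists 0, 0; rewrite mem_head addr0; split=> //; split.
have [f [v [Ff [Vv ->]]]] := HF z Hz.
case: (leqP M m) => Mm.
  have [Wa Wna] := HM m Mm.
  exists (0 + f), (v - - c); split.
    by rewrite in_cons; apply/orP; right; apply: allpairs_f => //; rewrite mem_head.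
  split; first by apply: VW => //; case: Hm => ->; rewrite ?opprK.
  by rewrite opprK add0r addrC -addrA.
exists (c + f), (v - 0); split.
  rewrite in_cons; apply/orP; right; apply: allpairs_f => //.
  rewrite in_cons mem_cat; apply/orP; right; apply/orP.
  have Hmi : m \in iota 0 M by rewrite mem_iota.
  by case: Hm => ->; [left|right]; apply: map_f.
split; first by apply: VW.
by rewrite subr0 addrA.
Qed.


Lemma head_B k (e : nat -> G) m : (forall i, inA (k i) (e i)) ->
  B m (\sum_(0 <= i < m) e i).
Proof.
move=> He; elim: m => [|m IH]; first by rewrite big_geq.
rewrite big_nat_recr //= -addn1.
have H1 := cd_transl (e m) IH; rewrite add0r in H1.
apply: cd_trans H1 _.
case: (He m) => [->|[n [_ [->|->]]]]; first exact: cd_refl.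
  by apply: cd_edge1; exists n; left; rewrite subr0.
by apply: cd_edge1; exists n; right; rewrite subr0.
Qed.

Lemma pigeon (s : seq G) (f : nat -> G) : (forall j, f j \in s) ->
  exists i j, (i < j)%N /\ f i = f j.
Proof.
move=> Hf; apply: NNPP => Hn.
have Hi (j : 'I_(size s).+1) : (index (f j) s < size s)%N by rewrite index_mem.
pose g (j : 'I_(size s).+1) : 'I_(size s) := Ordinal (Hi j).
have : injective g.
  move=> i j /(congr1 val) /= E.
  have Eij : f i = f j by rewrite -(nth_index 0 (Hf i)) E nth_index.
  case: (ltngtP i j) => H.
  - by exfalso; apply: Hn; exists i, j.
  - by exfalso; apply: Hn; exists j, i.
  - by apply: val_inj.
by move/leq_card; rewrite !card_ord ltnn.
Qed.

Lemma choicef (X Y : Type) (R : X -> Y -> Prop) :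
  (forall x, exists y, R x y) -> exists f : X -> Y, forall x, R x (f x).
Proof.
move=> H; exists (fun x => proj1_sig (constructive_indefinite_description _ (H x))).
by move=> x; case: constructive_indefinite_description.
Qed.

Lemma precompact_bounded (A : G -> Prop) : generates a -> precompact tau A ->
  exists r, forall z, A z -> B r z.
Proof.
move=> gen pA; apply: NNPP => nb.
have H1 : forall r, exists z, A z /\ ~ B r z.
  move=> r; apply: NNPP => H; apply: nb; exists r => z Az.
  by apply: NNPP => nB; apply: H; exists z.
have [px Hpx] := choicef H1.
have [len Hlen] := choicef (B_gen gen).
pose fix c j := if j is j'.+1 then maxn (c j') (len (px (c j' + j' + 1)%N)) else 0%N.
pose x j := px (c j + j + 1)%N.
have Ax j : A (x j) by case: (Hpx (c j + j + 1)%N).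
have nBx j : ~ B (c j + j + 1) (x j) by case: (Hpx (c j + j + 1)%N).
have Bx j : B (c j.+1) (x j).
  by apply: cd_mono (Hlen _); rewrite /= leq_maxr.
have cmono i j : (i <= j)%N -> (c i <= c j)%N.
  move=> ij; rewrite -(subnKC ij); elim: (j - i)%N => [|d IH]; first by rewrite addn0.
  by rewrite addnS /=; apply: leq_trans IH (leq_maxl _ _).
have sep j' j : (j' < j)%N -> ~ B j.+1 (x j - x j').
  move=> jj Hb; apply: (nBx j).
  have H2 := cd_transl (x j') Hb; rewrite subrK add0r in H2.
  have H3 : B (c j) (x j') by apply: cd_mono (Bx j'); apply: cmono.
  have := cd_trans H2 H3; rewrite /B => H4.
  have E : (j.+1 + c j = c j + j + 1)%N by rewrite addnC addn1 addnS.
  by rewrite /B -E.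
have step : forall j (N : G -> Prop), exists p : (G -> Prop) * nat, tau N -> N 0 ->
    tau p.1 /\ p.1 0 /\ (forall e n, inA p.2 e -> p.1 n -> N (n + e)) /\
    (forall j', (j' < j)%N -> forall b n, B j.+1 b -> p.1 n -> x j - x j' <> b + n).
  move=> j N; case: (classic (tau N /\ N 0)) => [[tN N0]|HN]; last first.
    by exists (N, 0%N) => tN N0; exfalso; apply: HN.
  have [V [W [tV [tW [V0 [W0 VW]]]]]] := cont0 tN N0.
  have [M HM] := conv tW W0.
  have [NF [tF [zF HF]]] := fin_inter
    (P := fun j' N' => forall b n, B j.+1 b -> N' n -> x j - x j' <> b + n)
    (fun i N1 N2 sub P b n Hb Hn => P b n Hb (sub n Hn))
    (fun j' jj => closed_B (sep j' j jj)).
  exists ((fun y => V y /\ NF y), M) => _ _ /=; split; first exact: tau_I.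
  split=> //; split.
    move=> e n He [Vn _]; rewrite -[e]opprK; apply: VW => //.
    case: He => [->|[m [Mm [->|->]]]]; first by rewrite oppr0.
      by case: (HM m Mm).
    by rewrite opprK; case: (HM m Mm).
  by move=> j' jj b n Hb [_ Hn]; apply: HF.
have [stp Hstp] := choicef (fun j => choicef (step j)).
pose fix Nseq j := if j is j'.+1 then (stp j' (Nseq j')).1 else (fun _ : G => True).
pose kseq j := (stp j (Nseq j)).2.
have Ninv j : tau (Nseq j) /\ Nseq j 0.
  elim: j => [|j [tN N0]]; first by split=> //; exact: tau_full.
  by have [H2 [H3 _]] := Hstp j (Nseq j) tN N0.
have Nstep j := Hstp j (Nseq j) (proj1 (Ninv j)) (proj2 (Ninv j)).
have tail e : (forall i, inA (kseq i) (e i)) ->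
    forall d p, Nseq p (\sum_(p <= i < p + d) e i).
  move=> He; elim=> [|d IH] p; first by rewrite addn0 big_geq //; case: (Ninv p).
  rewrite big_ltn; last by rewrite addnS ltnS leq_addr.
  rewrite -addSnnS addrC.
  by have [_ [_ [H4 _]]] := Nstep p; apply: H4; [apply: He|apply: IH].
have key j' j : (j' < j)%N -> ~ Us kseq (x j - x j').
  move=> jj [m [e [He E]]].
  have [_ [_ [_ H5]]] := Nstep j.
  case: (leqP m j.+1) => mj.
    apply: (H5 j' jj (\sum_(0 <= i < m) e i) 0).
    - by apply: cd_mono (head_B m He).
    - by case: (Ninv j.+1).
    - by rewrite addr0.
  apply: (H5 j' jj (\sum_(0 <= i < j.+1) e i) (\sum_(j.+1 <= i < m) e i)).
  - exact: head_B He.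
  - by rewrite -(subnKC (ltnW mj)); apply: tail.
  - by rewrite E -big_cat_nat // ltnW.
have [k' Hk'] := Us_diff kseq.
have tO : tau (Int (Us k')) by apply: TU_tau; apply: TU_Int.
have [F HF] := pA _ tO (ex_intro _ k' (fun u Hu => eq_ind_r _ Hu (add0r u))).
have [fu Hfu] := choicef (fun j => HF (x j) (Ax j)).
have [pf Hpf] := choicef (fun j => Hfu j).
have [i [j [ij Eij]]] := pigeon (f := fun j => fu j) (fun j => proj1 (Hpf j)).
apply: (key i j ij).
have [_ [Ui Exi]] := Hpf i.
have [_ [Uj Exj]] := Hpf j.
rewrite Exi Exj /= Eij opprD addrACA subrr add0r.
first [exact: (Hk' _ _ (Int_sub Uj) (Int_sub Ui)) | rewrite addrC; exact: (Hk' _ _ (Int_sub Uj) (Int_sub Ui)) | apply: Us_opp; rewrite opprD opprK; exact: (Hk' _ _ (Int_sub Ui) (Int_sub Uj))].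
Qed.

End Dist.

Theorem theorem2 (G : zmodType) (a : nat -> G) (tau : (G -> Prop) -> Prop) :
  T_sequence a -> generates a -> is_tau a tau ->
  asymorphic (ideal_coarse (precompact tau)) (cayley_coarse a).
Proof.
move=> HT gen Htau.
exists id, id; split=> //; split=> //; split.
  move=> E [Ediag [A [pA HA]]].
  have [r Hr] := precompact_bounded Htau HT gen pA.
  exists (fun x y => cay_dist_le a r x y); split.
    by split; [move=> x; apply: cd_refl|exists r].
  move=> x y /HA [z [Az ->]] /=.
  by have := cd_transl y (Hr z Az); rewrite add0r.
move=> E [Ediag [r Hr]].
exists (fun x y => cay_dist_le a r x y); split; last by move=> x y /Hr.
split; first by move=> x; apply: cd_refl.
exists (B a r); split; first exact: (B_precompact Htau r).
move=> x y Hxy; exists (x - y); split; last by rewrite subrK.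
by have := cd_transl (- y) Hxy; rewrite subrr.
Qed.
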